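(* In the parallel model with $P$ processors and a 2D layout (each processor has local memory of size $M=O(n^2/P)$), any classical Cholesky decomposition algorithm for $n{\times}n$ matrices has bandwidth cost $\Omega(n^2/P^{1/2})$ and latency cost $\Omega(P^{1/2})$.
   Context: The Cholesky decomposition of a real symmetric positive definite matrix $A$ is $A = LL^T$ with $L$ lower triangular; its entries satisfy $L(i,i)=\sqrt{A(i,i)-\sum_{k=1}^{i-1}L(i,k)^2}$ and $L(i,j)=\frac{1}{L(j,j)}\big(A(i,j)-\sum_{k=1}^{j-1}L(i,k)L(j,k)\big)$ for $i>j$. A ''classical'' Cholesky algorithm performs exactly these arithmetic operations, possibly reordered using only associativity and commutativity of addition (no pivoting, no distributivity). Parallel model: $P$ processors connected by a network, each with a local memory of $M$ words; the matrix is initially evenly distributed among the processors with only $O(1)$ copies stored overall (''2D layout'', $M=O(n^2/P)$). A message between two processors contains at most $M$ words. Bandwidth cost is the number of words sent or received and latency cost is the number of messages, both counted along the critical path of the algorithm (i.e., the lower bounds state that some processor must send or receive that many words/messages). *)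

(* Defs.v *)
From mathcomp Require Import all_boot.
From Stdlib Require List.

Set Implicit Arguments.
Unset Strict Implicit.
Unset Printing Implicit Defensive.

(* Symbolic model of a classical Cholesky computation on an n x n SPD matrix *)
(* A (indices in 'I_n).  The "words" a processor can hold are:              *)
(*   Lv i j        : the entry L(i,j)  (j <= i)                             *)
(*   Ps i j a S    : the partial sum  [a] A(i,j) - sum_{k in S} L(i,k)L(j,k) *)
(*                   (j <= i, S a subset of {k | k < j}; [a] says whether  *)
(*                   the term A(i,j) is included).                          *)
(* Special cases: Ps i j true set0  = the input entry A(i,j);               *)
(*                Ps i j false [set k] = the product L(i,k) L(j,k).        *)
Inductive item (n : nat) : Type :=
| Lv of 'I_n & 'I_n
| Ps of 'I_n & 'I_n & bool & {set 'I_n}.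

Definition below (n : nat) (j : 'I_n) : {set 'I_n} := [set k : 'I_n | k < j].

(* [produces m x]: x can be obtained by ONE arithmetic operation of the     *)
(* classical Cholesky algorithm from operands present in local memory m:   *)
(* a multiplication L(i,k)*L(j,k); an addition of two partial sums of the   *)
(* same entry with disjoint sets of terms (any association/commutation);   *)
(* the square root giving L(i,i); the division giving L(i,j), j < i.       *)
Definition produces (n : nat) (m : seq (item n)) (x : item n) : Prop :=
  match x with
  | Lv i j =>
      (i = j /\ List.In (Ps i i true (below i)) m)
      \/ (j < i /\ List.In (Ps i j true (below j)) m /\ List.In (Lv j j) m)
  | Ps i j a T =>
      j <= i /\
      ((a = false /\ exists k : 'I_n,
           k < j /\ T = [set k] /\ List.In (Lv i k) m /\ List.In (Lv j k) m)
       \/ (exists (a1 : bool) (S1 : {set 'I_n}) (a2 : bool) (S2 : {set 'I_n}),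
             List.In (Ps i j a1 S1) m /\ List.In (Ps i j a2 S2) m /\
             ~~ (a1 && a2) /\ [disjoint S1 & S2] /\
             a = a1 || a2 /\ T = S1 :|: S2))
  end.

(* Events of a parallel execution (serialized):                            *)
(*   Comp p x     : processor p performs one arithmetic operation giving x  *)
(*   Keep p m     : processor p discards words, keeping only m             *)
(*   Msg p q xs   : p sends the message xs (a list of words) to q          *)
Inductive event (n P : nat) : Type :=
| Comp of 'I_P & item n
| Keep of 'I_P & seq (item n)
| Msg of 'I_P & 'I_P & seq (item n).

Definition state (n P : nat) := 'I_P -> seq (item n).

Definition fits (n P M : nat) (s : state n P) : Prop := forall p, size (s p) <= M.

Definition step (n P M : nat) (s : state n P) (e : event n P) (s' : state n P)
  : Prop :=
  fits M s' /\
  match e with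
  | Comp p x => produces (s p) x /\ s' p = x :: s p /\
                (forall r, r != p -> s' r = s r)
  | Keep p m => (forall y, List.In y m -> List.In y (s p)) /\ s' p = m /\
                (forall r, r != p -> s' r = s r)
  | Msg p q xs => p != q /\ size xs <= M /\
                  (forall y, List.In y xs -> List.In y (s p)) /\
                  s' q = xs ++ s q /\ (forall r, r != q -> s' r = s r)
  end.

(* a run: the successive events with the state after each one *)
Fixpoint valid_run (n P M : nat) (s : state n P)
    (run : seq (event n P * state n P)) : Prop :=
  match run with
  | [::] => True
  | (e, s') :: rest => step M s e s' /\ valid_run M s' rest
  end.

Definition comp_item (n P : nat) (e : event n P) : option (item n) :=
  match e with Comp _ x => Some x | _ => None end.

Definition computed (n P : nat) (run : seq (event n P * state n P)) :=
  pmap (@comp_item n P) (map fst run).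

Definition words_of (n P : nat) (p : 'I_P) (e : event n P) : nat :=
  match e with
  | Msg a b xs => if (a == p) || (b == p) then size xs else 0
  | _ => 0
  end.

Definition msgs_of (n P : nat) (p : 'I_P) (e : event n P) : nat :=
  match e with
  | Msg a b _ => if (a == p) || (b == p) then 1 else 0
  | _ => 0
  end.

Definition bandwidth (n P : nat) (p : 'I_P) (run : seq (event n P * state n P)) :=
  sumn [seq words_of p ep.1 | ep <- run].

Definition latency (n P : nat) (p : 'I_P) (run : seq (event n P * state n P)) :=
  sumn [seq msgs_of p ep.1 | ep <- run].

(* 2D layout with constant C: M = O(n^2/P) (namely M * P <= C * n^2), each  *)
(* processor initially holds at most M words (so at most C n^2 / P entries, *)
(* i.e. an even distribution, and at most C n^2 = O(1) copies overall),    *)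
(* the initial memories contain only entries of A (lower triangle, A being *)
(* symmetric), and every entry of A is stored somewhere.                   *)
Definition layout_2D (C n P M : nat) (init : state n P) : Prop :=
  M * P <= C * n ^ 2 /\ fits M init /\
  (forall p x, List.In x (init p) ->
      exists i j : 'I_n, j <= i /\ x = Ps i j true set0) /\
  (forall i j : 'I_n, j <= i -> exists p, List.In (Ps i j true set0) (init p)).

(* a classical Cholesky algorithm execution from the initial layout: a      *)
(* valid run that performs every operation at most once (exactly the       *)
(* classical operations, no recomputation) and computes every L(i,j).      *)
Definition classical_cholesky_run (n P M : nat) (init : state n P)
    (run : seq (event n P * state n P)) : Prop :=
  valid_run M init run /\ List.NoDup (computed run) /\
  (forall i j : 'I_n, j <= i -> List.In (Lv i j) (computed run)).

(* Main.v *)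
From HB Require Import structures.
Require Import Defs.
From mathcomp Require Import all_boot zify ring.
From Stdlib Require List Classical PeanoNat.
Set Implicit Arguments. Unset Strict Implicit. Unset Printing Implicit Defensive.

Section ItemEq.
Variable n : nat.
Definition eqitem (x y : item n) : bool :=
  match x, y with
  | Lv a b, Lv c d => (a == c) && (b == d)
  | Ps a b c T, Ps a2 b2 c2 T2 => [&& a == a2, b == b2, c == c2 & T == T2]
  | _, _ => false end.
Lemma eqitemP : Equality.axiom eqitem.
Proof.
case=> [a b|a b c T] [a' b'|a' b' c' S'] /=; try by constructor.
- by apply: (iffP andP) => [[/eqP-> /eqP->]|[-> ->]].
- by apply: (iffP and4P) => [[/eqP-> /eqP-> /eqP-> /eqP->]|[-> -> -> ->]].
Qed.
HB.instance Definition _ := hasDecEq.Build (item n) eqitemP.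
End ItemEq.

Lemma InP (T : eqType) (x : T) s : reflect (List.In x s) (x \in s).
Proof.
elim: s => [|y s IH] /=; first by constructor.
rewrite inE; apply: (iffP orP).
- by case=> [/eqP->|/IH]; [left|right].
- by case=> [->|/IH]; [left|right].
Qed.

Section Run.
Variables (n P M : nat) (init : state n P) (run : seq (event n P * state n P)).
Variable e0 : event n P.
Definition ev t := (nth (e0, init) run t).1.
Definition st t := if t is t'.+1 then (nth (e0, init) run t').2 else init.

Lemma valid_nth_gen (d : event n P * state n P) (r : seq (event n P * state n P)) (i0 : state n P) : valid_run M i0 r -> forall t, t < size r ->
  step M (if t is t'.+1 then (nth d r t').2 else i0) (nth d r t).1 (nth d r t).2.
Proof.
elim: r i0 => [|[e s] r IH] i0 //= [Hs Hr] [|t] //= Ht.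
by have := IH s Hr t Ht; case: t Ht.
Qed.

Lemma valid_nth : valid_run M init run -> forall t, t < size run ->
  step M (st t) (ev t) (st t.+1).
Proof. by move=> H t Ht; have := valid_nth_gen (e0, init) H Ht; case: t Ht. Qed.

Definition is_prod (e : event n P) (q : 'I_P) (i j k : 'I_n) : bool :=
  match e with
  | Comp q' (Ps i' j' a T) => [&& q' == q, i' == i, j' == j, ~~ a & T == [set k]]
  | _ => false end.

Lemma computed_In x : List.In x (computed run) ->
  exists2 t, t < size run & exists q, ev t = Comp q x.
Proof.
rewrite /computed /ev; elim: run => [|[e s] r IH] //=.
case: e => [q y|q m|q1 q2 xs] /=.
- case=> [->|/IH [t Ht [q' Hq]]]; first by exists 0 => //; exists q.
  by exists t.+1 => //; exists q'.
- by move/IH=> [t Ht [q' Hq]]; exists t.+1 => //; exists q'.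
- by move/IH=> [t Ht [q' Hq]]; exists t.+1 => //; exists q'.
Qed.

Lemma computed_uniq t1 t2 q1 q2 x : List.NoDup (computed run) ->
  t1 < size run -> t2 < size run -> ev t1 = Comp q1 x -> ev t2 = Comp q2 x ->
  t1 = t2.
Proof.
rewrite /computed /ev; elim: run t1 t2 => [|[e s] r IH] //= t1 t2.
have inC t q : t < size r -> (nth (e0, init) r t).1 = Comp q x ->
    List.In x (pmap (@comp_item n P) [seq i.1 | i <- r]).
  elim: r t {IH} => [|[e' s'] r' IH'] //= [|t] /=.
    by move=> _ ->; left.
  rewrite ltnS => Ht H; case: e' => /=; try by move=> *; apply: IH' H.
  by move=> q' y; right; apply: IH' H.
have NDt : List.NoDup (oapp (cons^~ (pmap (@comp_item n P) [seq i.1 | i <- r]))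
       (pmap (@comp_item n P) [seq i.1 | i <- r]) (comp_item e)) ->
       List.NoDup (pmap (@comp_item n P) [seq i.1 | i <- r]).
  by case: (comp_item e) => //= y ND; inversion ND.
case: t1 t2 => [|t1] [|t2] //=.
- move=> ND _; rewrite ltnS => Ht2 He H2; subst e; move: ND => /= ND.
  inversion ND; subst; by case: H1; apply: inC H2.
- move=> ND; rewrite ltnS => Ht1 _ H1 He; subst e; move: ND => /= ND.
  inversion ND; subst; by case: H2; apply: inC H1.
- rewrite !ltnS => ND Ht1 Ht2 H1 H2; congr S; apply: IH Ht1 Ht2 H1 H2.
  exact: NDt.
Qed.
End Run.

Section StepFacts.
Variables (n P M : nat).

Definition hold (s : state n P) (q : 'I_P) (i j k : 'I_n) :=
  exists a (T : {set 'I_n}), k \in T /\ Ps i j a T \in s q.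

Definition good (x : item n) := if x is Ps _ _ false T then T != set0 else true.


Lemma step_holds (s : state n P) (e : event n P) (s' : state n P) q i j k : step M s e s' -> hold s' q i j k ->
  hold s q i j k \/ is_prod e q i j k \/
  exists r xs, e = Msg r q xs /\ (exists a (T : {set 'I_n}), k \in T /\ Ps i j a T \in xs)
               /\ hold s r i j k.
Proof.
move=> [_ He] [a [T [kT inq]]].
case: e He => [q' x|q' m|q1 q2 xs].
- move=> [Hp [Hq' Ho]]; case: (eqVneq q q') => [Eq|Nq]; last first.
    by left; exists a, T; rewrite -Ho.
  subst q'; move: inq; rewrite Hq' inE => /orP [/eqP Ex|inq]; last first.
    by left; exists a, T.
  subst x; move: Hp => /= [_ [[-> [k' [_ [ET _]]]] | [a1 [S1 [a2 [S2 [H1 [H2 [_ [_ [Ea ET]]]]]]]]]]].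
  + right; left; move: kT; rewrite ET inE => /eqP->; by rewrite /= !eqxx.
  + left; move: kT; rewrite ET inE => /orP [kS|kS].
    * by exists a1, S1; split => //; apply/InP.
    * by exists a2, S2; split => //; apply/InP.
- move=> [Hsub [Hq' Ho]]; left; case: (eqVneq q q') => [Eq|Nq]; last first.
    by exists a, T; rewrite -Ho.
  subst q'; exists a, T; split => //; apply/InP; apply: Hsub; apply/InP.
  by rewrite -Hq'.
- move=> [Nq [_ [Hxs [Hq2 Ho]]]]; case: (eqVneq q q2) => [Eq|Nq2]; last first.
    by left; exists a, T; rewrite -Ho.
  subst q2; move: inq; rewrite Hq2 mem_cat => /orP [inx|inq]; last first.
    by left; exists a, T.
  right; right; exists q1, xs; split => //; split; first by exists a, T.
  exists a, T; split => //; apply/InP; apply: Hxs; exact/InP.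
Qed.

Lemma step_good (s : state n P) (e : event n P) (s' : state n P) : step M s e s' ->
  (forall q, all good (s q)) -> forall q, all good (s' q).
Proof.
move=> [_ He] G q; case: e He => [q' x|q' m|q1 q2 xs].
- move=> [Hp [Hq' Ho]]; case: (eqVneq q q') => [Eq|Nq]; last by rewrite Ho.
  subst q'; rewrite Hq' /= G andbT; clear Hq' Ho.
  case: x Hp => // i j [] T //= [_ [[_ [k [_ [ET _]]]] | [a1 [S1 [a2 [S2 [H1 [H2 [_ [_ [Ea ET]]]]]]]]]]].
  + by rewrite ET; apply/eqP => /setP/(_ k); rewrite !inE eqxx.
  + move: Ea; case: a1 H1 => //; case: a2 H2 => // H2 H1 _.
    have := allP (G q) _ (introT (InP _ _) H1) => /= /set0Pn [k kS].
    by rewrite ET; apply/set0Pn; exists k; rewrite inE kS.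
- move=> [Hsub [Hq' Ho]]; case: (eqVneq q q') => [Eq|Nq]; last by rewrite Ho.
  subst q'; rewrite Hq'; apply/allP => x /InP /Hsub /InP; exact: (allP (G q)).
- move=> [Nq [_ [Hxs [Hq2 Ho]]]]; case: (eqVneq q q2) => [Eq|Nq2]; last by rewrite Ho.
  subst q2; rewrite Hq2 all_cat G andbT; apply/allP => x /InP /Hxs /InP.
  exact: (allP (G q1)).
Qed.

Lemma prod_operands (s : state n P) (e : event n P) (s' : state n P) q i j k : step M s e s' -> (forall q, all good (s q)) ->
  is_prod e q i j k -> k < j /\ j <= i /\ Lv i k \in s q /\ Lv j k \in s q.
Proof.
move=> [_ He] G; case: e He => // q' [] // i' j' a T [Hp _] /and5P [/eqP E1 /eqP E2 /eqP E3 /negbTE Ea0 /eqP ET].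
subst; move: Hp => /= [ji [[_ [k' [kj [ET Hs]]]] | [a1 [S1 [a2 [S2 [H1 [H2 [_ [Hd [Ea ET]]]]]]]]]]].
- move/setP: ET => /(_ k); rewrite !inE eqxx => /esym /eqP ->.
  by case: Hs => /InP ? /InP ?.
- exfalso; have /norP [/negbTE E1 /negbTE E2] : ~~ (a1 || a2) by rewrite -Ea.
  subst a1 a2.
  have := allP (G q) _ (introT (InP _ _) H1) => /= /set0Pn [k1 k1S].
  have := allP (G q) _ (introT (InP _ _) H2) => /= /set0Pn [k2 k2S].
  have: k1 \in [set k] by rewrite ET inE k1S.
  have: k2 \in [set k] by rewrite ET inE k2S orbT.
  rewrite !inE => /eqP E2 /eqP E1; subst.
  by move/pred0P: Hd => /(_ k) /=; rewrite k1S k2S.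
Qed.
End StepFacts.

Section RunFacts.
Variables (n P M : nat) (init : state n P) (run : seq (event n P * state n P)).
Variable e0 : event n P.
Hypothesis Hv : valid_run M init run.
Hypothesis Hfit : fits M init.
Hypothesis Hinit : forall q x, x \in init q -> exists i j : 'I_n, x = Ps i j true set0.

Local Notation ev := (ev init run e0).
Local Notation st := (st init run e0).

Lemma step_t t : t < size run -> step M (st t) (ev t) (st t.+1).
Proof. exact: valid_nth. Qed.

Lemma fits_t t : t <= size run -> fits M (st t).
Proof. by case: t => [|t] // /step_t []. Qed.

Lemma good_t t : t <= size run -> forall q, all (@good n) (st t q).
Proof.
elim: t => [|t IH] Ht q.
  by apply/allP => x /Hinit [i [j ->]].
by apply: (step_good (step_t Ht)); apply: IH; apply: ltnW.
Qed.

Lemma nohold0 q i j k : ~ hold (st 0) q i j k.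
Proof. by move=> [a [T [kT /Hinit [i' [j' [_ _ _ ET]]]]]]; move: kT; rewrite ET inE. Qed.

Lemma Lv_true t q i j : t < size run -> ev t = Comp q (Lv i j) ->
  exists T, Ps i j true T \in st t q /\ forall k : 'I_n, k < j -> k \in T.
Proof.
move=> Ht He; have := step_t Ht; rewrite He => [[_ [/= Hp _]]].
case: Hp => [[Eij Hin]|[ji [Hin _]]].
- subst j; exists (below i); split; first exact/InP.
  by move=> k kj; rewrite inE.
- exists (below j); split; first exact/InP.
  by move=> k kj; rewrite inE.
Qed.

Lemma Lv_hold t q i j (k : 'I_n) : t < size run -> ev t = Comp q (Lv i j) -> k < j ->
  hold (st t) q i j k.
Proof.
move=> Ht He kj; have [T [HT HkT]] := Lv_true Ht He.
by exists true, T; split => //; apply: HkT.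
Qed.

Lemma no_prod_no_hold i j k t : t <= size run ->
  (forall u q, u < t -> ~~ is_prod (ev u) q i j k) -> forall q, ~ hold (st t) q i j k.
Proof.
elim: t => [|t IH] Ht Hn q; first exact: nohold0.
have Ht' : t < size run by [].
have IH' : forall q, ~ hold (st t) q i j k.
  by apply: IH; [apply: ltnW | move=> u q' ut; apply: Hn; apply: ltnW].
move/(step_holds (step_t Ht')) => [|[|[r [xs [_ [_ H]]]]]].
- exact: IH'.
- by apply/negP; apply: Hn.
- exact: IH' H.
Qed.

Hypothesis Hnd : List.NoDup (computed run).

Lemma prod_unique u1 u2 q1 q2 i j k : u1 < size run -> u2 < size run ->
  is_prod (ev u1) q1 i j k -> is_prod (ev u2) q2 i j k -> u1 = u2 /\ q1 = q2.
Proof.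
move=> H1 H2; rewrite /is_prod.
case E1: (ev u1) => [q1' x1| |] //; case: x1 E1 => // i1 j1 a1 T1 E1.
case E2: (ev u2) => [q2' x2| |] //; case: x2 E2 => // i2 j2 a2 T2 E2.
move=> /and5P [/eqP e1 /eqP e2 /eqP e3 /negbTE e4 /eqP e5].
move=> /and5P [/eqP f1 /eqP f2 /eqP f3 /negbTE f4 /eqP f5]; subst.
have Eu := computed_uniq Hnd H1 H2 E1 E2; subst u2; split => //.
by move: E2; rewrite E1 => [[]].
Qed.

Hypothesis Hall : forall i j : 'I_n, j <= i -> List.In (Lv i j) (computed run).

Lemma required (i j k : 'I_n) : k < j -> j <= i ->
  exists u q, u < size run /\ is_prod (ev u) q i j k.
Proof.
move=> kj ji; have [u Hu [q Hq]] := computed_In init e0 (Hall ji).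
have Hh := Lv_hold Hu Hq kj.
suff: ~ forall u' q', u' < u -> ~~ is_prod (ev u') q' i j k.
  move=> H; apply: Classical_Prop.NNPP => H'; apply: H => u' q' Hu'; apply/negP => Hp.
  by apply: H'; exists u', q'; split => //; apply: ltn_trans Hu.
by move=> H; apply: (no_prod_no_hold (ltnW Hu) H Hh).
Qed.

End RunFacts.

Definition LW (n : nat) (U : {set 'I_n * 'I_n}) := [set tr : 'I_n * 'I_n * 'I_n |
  [&& (tr.1.1, tr.2) \in U, (tr.1.2, tr.2) \in U & tr.1 \in U]].

Lemma pair_helper (X Y : finType) (F : X -> Y -> nat) :
  \sum_(x : X) \sum_(y : Y) F x y = \sum_(i : X * Y) F i.1 i.2.
Proof. by rewrite pair_bigA. Qed.

Lemma card_pair_sum (X Y : finType) (A : {set X * Y}) :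
  #|A| = \sum_(y : Y) #|[set x | (x, y) \in A]|.
Proof.
transitivity (\sum_(i : X * Y) (fun x y => nat_of_bool ((x, y) \in A)) i.1 i.2).
  by rewrite -sum1_card big_mkcond /=; apply: eq_bigr => [[x y]] _ /=; case: ifP.
rewrite -(pair_helper (fun x y => nat_of_bool ((x, y) \in A))) exchange_big; apply: eq_bigr => y _.
rewrite -sum1_card [RHS]big_mkcond /=; apply: (@eq_bigr nat 0 addn) => x _; rewrite inE; case: ifP => _ //.
Qed.

Lemma LW_card n (U : {set 'I_n * 'I_n}) s : #|U| <= s * s -> #|LW U| <= #|U| * s.
Proof.
move=> Us.
rewrite card_pair_sum [in X in _ <= X * _]card_pair_sum big_distrl /=.
apply: leq_sum => k _.
set C := [set x | _]; set D := [set x | _].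
have C1 : #|C| <= #|D| * #|D|.
  rewrite -cardsX; apply: subset_leq_card; apply/subsetP => [[i j]].
  by rewrite !inE /= => /and3P [-> -> _].
have C2 : #|C| <= #|U|.
  apply: (@leq_trans #|[set x | x \in U]|); last by rewrite cardsE.
  apply: subset_leq_card; apply/subsetP => [[i j]].
  by rewrite !inE /= => /and3P [_ _ ->].
case: (leqP #|D| s) => Ds.
  by apply: leq_trans C1 _; rewrite leq_mul2l Ds orbT.
by apply: leq_trans C2 (leq_trans Us _); rewrite leq_mul2r (ltnW Ds) orbT.
Qed.

Definition msg_items (n P : nat) (p : 'I_P) (e : event n P) : seq (item n) :=
  match e with Msg r q xs => if (r == p) || (q == p) then xs else [::] | _ => [::] end.

Definition pairs (n : nat) (x : item n) : 'I_n * 'I_n :=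
  match x with Lv i j => (i, j) | Ps i j _ _ => (i, j) end.

Definition keyed (n : nat) (x : item n) : bool :=
  match x with Lv _ _ => true | Ps _ _ a _ => a end.


Section Proc.
Variables (n P M : nat) (init : state n P) (run : seq (event n P * state n P)).
Variable e0 : event n P.
Hypothesis Hv : valid_run M init run.
Hypothesis Hfit : fits M init.
Hypothesis Hinit : forall q x, x \in init q -> exists i j : 'I_n, x = Ps i j true set0.
Variable p : 'I_P.

Local Notation ev := (ev init run e0).
Local Notation st := (st init run e0).

Definition comm a b := flatten [seq msg_items p (ev u) | u <- iota a (b - a)].
Definition W a b := sumn [seq words_of p (ev u) | u <- iota a (b - a)].

Lemma size_comm a b : size (comm a b) = W a b.
Proof.
rewrite /comm /W size_flatten /shape -map_comp; congr sumn; apply: eq_map => u /=.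
by case: (ev u) => //= r q xs; case: ifP.
Qed.

Lemma comm_cat a b c : a <= b <= c -> comm a c = comm a b ++ comm b c.
Proof.
move=> /andP [ab bc]; rewrite /comm -flatten_cat -map_cat.
have -> : c - a = (b - a) + (c - b) by lia.
by rewrite iotaD subnKC.
Qed.

Lemma W_cat a b c : a <= b <= c -> W a c = W a b + W b c.
Proof. by move=> H; rewrite -!size_comm (comm_cat H) size_cat. Qed.

Lemma comm_snoc a t : a <= t -> comm a t.+1 = comm a t ++ msg_items p (ev t).
Proof.
move=> hat; rewrite (@comm_cat a t t.+1) ?hat ?leqnSn //.
by rewrite /comm subSnn /= cats0.
Qed.

Lemma comm_mem a b t x : a <= t < b -> x \in msg_items p (ev t) -> x \in comm a b.
Proof.
move=> /andP [hat tb] xin; rewrite (@comm_cat a t b) ?hat ?(ltnW tb) //.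
rewrite (@comm_cat t t.+1 b) ?leqnSn ?tb // /comm subSnn /= cats0.
by rewrite !mem_cat xin orbT.
Qed.

Lemma origin_d a d x : a + d <= size run -> keyed x -> x \in st (a + d) p ->
  pairs x \in map (@pairs n) (st a p ++ comm a (a + d)).
Proof.
elim: d x => [|d IH] x.
  by rewrite addn0 => _ _ xin; rewrite /comm subnn /= cats0 map_f.
rewrite addnS => Ht kx xin.
have hat2 : a <= a + d by apply: leq_addr.
have IH' : forall y, keyed y -> y \in st (a + d) p ->
    pairs y \in map (@pairs n) (st a p ++ comm a (a + d).+1).
  move=> y ky yin; have H := IH y (ltnW Ht) ky yin.
  by rewrite (comm_snoc hat2) catA [map _ (_ ++ msg_items _ _)]map_cat mem_cat H.
move: Ht IH' xin; set t := a + d => Ht IH' xin.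
have [_ He] := step_t e0 Hv Ht; move: He xin.
case E: (ev t) => [q y|q m|q1 q2 xs].
- move=> [Hp [Hq Ho]]; case: (eqVneq p q) => [Epq|Npq]; last by rewrite Ho // => /IH'; apply.
  subst q; rewrite Hq inE => /orP [/eqP Exy|]; last by move/IH'; apply.
  subst y; clear E Hq Ho; case: x kx Hp => [i j|i j [] T] //= _.
  + move=> [[Eij H]|[_ [H _]]].
    * by subst j; apply: (IH' _ _ (introT (InP _ _) H)).
    * by apply: (IH' _ _ (introT (InP _ _) H)).
  + move=> [_ [[//] | [a1 [S1 [a2 [S2 [H1 [H2 [_ [_ [Ea _]]]]]]]]]]].
    case: a1 Ea H1 => H1' H1; first by apply: (IH' _ _ (introT (InP _ _) H1)).
    case: a2 H1' H2 => // _ H2; by apply: (IH' _ _ (introT (InP _ _) H2)).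
- move=> [Hsub [Hq Ho]]; case: (eqVneq p q) => [Epq|Npq]; last by rewrite Ho // => /IH'; apply.
  subst q; rewrite Hq => /InP /Hsub /InP; exact: IH'.
- move=> [Nq [_ [Hxs [Hq2 Ho]]]]; case: (eqVneq p q2) => [Epq|Npq]; last by rewrite Ho // => /IH'; apply.
  subst q2; rewrite Hq2 mem_cat => /orP [xin|]; last by move/IH'; apply.
  rewrite (comm_snoc hat2) map_cat mem_cat; apply/orP; right.
  have E2 : ev (a + d) = Msg q1 p xs := E.
  by apply: map_f; rewrite mem_cat E2 /= eqxx orbT xin orbT.
Qed.
Lemma origin a t x : a <= t -> t <= size run -> keyed x -> x \in st t p ->
  pairs x \in map (@pairs n) (st a p ++ comm a t).
Proof. by move=> /subnKC <-; apply: origin_d. Qed.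

Hypothesis Hnd : List.NoDup (computed run).
Hypothesis Hall : forall i j : 'I_n, j <= i -> List.In (Lv i j) (computed run).

Definition Useq a b := st a p ++ st b p ++ comm a b.

Lemma fate a b t0 i j k : a <= t0 -> t0 < b -> b <= size run ->
  is_prod (ev t0) p i j k -> (i, j) \in map (@pairs n) (Useq a b).
Proof.
move=> ha h0 hb Hp; apply: Classical_Prop.NNPP => Hn.
have H0 : t0 < size run by apply: leq_trans hb.
have [kj [ji _]] := prod_operands (step_t e0 Hv H0) (good_t e0 Hv Hinit (ltnW H0)) Hp.
have Hb : ~ hold (st b) p i j k.
  move=> [a' [T [_ HT]]]; apply: Hn.
  by have := map_f (@pairs n) HT; rewrite /Useq => /= H; rewrite map_cat mem_cat map_cat mem_cat H orbT.
have Hc : forall t, t <= size run ->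
   (t <= t0 -> forall q, ~ hold (st t) q i j k) /\
   (t0 < t -> forall q, hold (st t) q i j k -> q = p /\ t < b).
  elim=> [|t IH] Ht.
    by split => // _ q; apply: nohold0.
  have [IH1 IH2] := IH (ltnW Ht).
  have Bnd : t.+1 <= b -> hold (st t.+1) p i j k -> t.+1 < b.
    by move=> tb Hh; rewrite ltn_neqAle tb andbT; apply/eqP => Eb; apply: Hb; rewrite -Eb.
  split.
  - move=> Ht1 q /(step_holds (step_t e0 Hv Ht)) [|[|[r [xs [_ [_ Hr]]]]]].
    + by apply: IH1; apply: ltnW.
    + move=> Hq; have [Et _] := prod_unique Hnd Ht H0 Hq Hp.
      by move: Ht1; rewrite Et ltnn.
    + by apply: IH1 Hr; apply: ltnW.
  - move=> Ht1 q Hh0; have := step_holds (step_t e0 Hv Ht) Hh0.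
    case=> [|[|[r [xs [Ee [[a1 [T1 [kT1 inT1]]] Hr]]]]]].
    + move=> Hh; case: (leqP t t0) => tt0; first by case: (IH1 tt0 q Hh).
      have [Eq tb] := IH2 tt0 q Hh; subst q; split => //; exact: Bnd.
    + move=> Hq; have [Et Eq] := prod_unique Hnd Ht H0 Hq Hp; subst t q.
      by split => //; apply: Bnd.
    + case: (leqP t t0) => tt0; first by case: (IH1 tt0 r Hr).
      have [Er tb] := IH2 tt0 r Hr; subst r; exfalso; apply: Hn.
      rewrite /Useq !map_cat !mem_cat; apply/orP; right; apply/orP; right.
      apply: (@map_f _ _ (@pairs n) _ (Ps i j a1 T1)); apply: (@comm_mem a b t); first by rewrite tb andbT (leq_trans ha) // ltnW.
      by rewrite Ee /= eqxx.
have [u Hu [q Hq]] := computed_In init e0 (Hall ji).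
have Hh := Lv_hold Hv Hu Hq kj.
case: (leqP u t0) => ut0; first by case: ((Hc u (ltnW Hu)).1 ut0 q Hh).
have [Eq ub] := (Hc u (ltnW Hu)).2 ut0 q Hh; subst q.
have [T [HT _]] := Lv_true Hv Hu Hq.
have hau : a <= u by apply: leq_trans ha (ltnW ut0).
have := origin hau (ltnW Hu) (isT : keyed (Ps i j true T)) HT => /= H.
apply: Hn; move: H; rewrite /Useq (@comm_cat a u b) ?hau ?(ltnW ub) //.
rewrite !map_cat !mem_cat => /orP [->//|H]; by rewrite H !orbT.
Qed.

Definition Tr a b := [set tr : 'I_n * 'I_n * 'I_n |
  has (fun u => is_prod (ev u) p tr.1.1 tr.1.2 tr.2) (iota a (b - a))].
Definition U a b := [set pr : 'I_n * 'I_n | pr \in map (@pairs n) (Useq a b)].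

Lemma sub_U a u b x : a <= u -> u <= b ->
  x \in map (@pairs n) (st a p ++ comm a u) -> x \in U a b.
Proof.
move=> hau hub; rewrite inE /Useq (@comm_cat a u b) ?hau ?hub //.
rewrite !map_cat !mem_cat => /orP [->//|H]; by rewrite H !orbT.
Qed.

Lemma Tr_sub a b : a <= b -> b <= size run -> Tr a b \subset LW (U a b).
Proof.
move=> hab hb; apply/subsetP => [[[i j] k]]; rewrite !inE /= => /hasP [u].
rewrite mem_iota subnKC // => /andP [hau hub] Hp.
have Hu : u < size run by apply: leq_trans hb.
have [_ [_ [Hi Hj]]] := prod_operands (step_t e0 Hv Hu) (good_t e0 Hv Hinit (ltnW Hu)) Hp.
have Ri := origin hau (ltnW Hu) (isT : keyed (Lv i k)) Hi.
have Rj := origin hau (ltnW Hu) (isT : keyed (Lv j k)) Hj.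
have := sub_U hau (ltnW hub) Ri; have := sub_U hau (ltnW hub) Rj; rewrite !inE /= => -> ->.
by rewrite /=; apply: (fate hau hub hb Hp).
Qed.

Lemma card_U a b : a <= b -> b <= size run -> #|U a b| <= M + M + W a b.
Proof.
move=> hab hb.
have -> : U a b = [set pr in map (@pairs n) (Useq a b)] by apply/setP => x; rewrite !inE.
rewrite cardsE (leq_trans (card_size _)) // size_map /Useq !size_cat size_comm addnA.
by rewrite !leq_add2r leq_add // (fits_t e0 Hv Hfit) // (leq_trans hab).
Qed.

Lemma W_nil a : W a a = 0.
Proof. by rewrite /W subnn. Qed.

Lemma W_one t : W t t.+1 = words_of p (ev t).
Proof. by rewrite /W subSnn /= addn0. Qed.

Lemma words_le t : t < size run -> words_of p (ev t) <= M.
Proof.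
move=> Ht; have [_ He] := step_t e0 Hv Ht; move: He.
by case: (ev t) => //= r q xs [_ [Hs _]]; case: ifP.
Qed.

Lemma Tr_nil a : Tr a a = set0.
Proof. by apply/setP => x; rewrite !inE subnn. Qed.

Lemma Tr_split a b c : a <= b <= c -> #|Tr a c| <= #|Tr a b| + #|Tr b c|.
Proof.
move=> /andP [ab bc].
apply: (@leq_trans #|Tr a b :|: Tr b c|); last by rewrite cardsU leq_subr.
apply: subset_leq_card; apply/subsetP => x; rewrite !inE /= => /hasP [u].
rewrite mem_iota => /andP [au uc] Hu.
case: (ltnP u b) => ub; apply/orP; [left|right]; apply/hasP; exists u => //;
  rewrite mem_iota; apply/andP; split; lia.
Qed.

Lemma seg_block a b s : a <= b -> b <= size run -> 2 * M + W a b <= s * s ->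
  #|Tr a b| <= (2 * M + W a b) * s.
Proof.
move=> ab bN Hs.
have HU : #|U a b| <= 2 * M + W a b by rewrite mul2n -addnn card_U.
apply: leq_trans (subset_leq_card (Tr_sub ab bN)) _.
apply: leq_trans (LW_card (leq_trans HU Hs)) _.
by rewrite leq_mul2r HU orbT.
Qed.

Lemma segments s : 0 < M -> 4 * M <= s * s -> forall a, a <= size run ->
  M * #|Tr a (size run)| <= (4 * M * s) * (M + W a (size run)).
Proof.
move=> M0 Hs a; set N := size run.
move: {2}(N - a) (leqnn (N - a)) => d; elim: d a => [|d IH] a.
  move=> Hd aN; have -> : a = N by apply/eqP; rewrite eqn_leq aN -subn_eq0 -leqn0.
  by rewrite Tr_nil cards0 muln0.
move=> Hd aN; case: (eqVneq a N) => [->|aN'].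
  by rewrite Tr_nil cards0 muln0.
have aN2 : a < N by rewrite ltn_neqAle aN' aN.
case: (ltnP (W a N) M) => HW.
  have H1 : 2 * M + W a N <= s * s by apply: leq_trans Hs; lia.
  have Hb := seg_block aN (leqnn N) H1.
  have H2 : #|Tr a N| <= 4 * M * s.
    by apply: leq_trans Hb _; rewrite leq_mul2r; apply/orP; right; lia.
  apply: (@leq_trans (M * (4 * M * s))); first by rewrite leq_mul2l H2 orbT.
  by rewrite mulnC leq_mul2l leq_addr orbT.
have Hex : exists t, (a < t <= N) && (M <= W a t) by exists N; rewrite aN2 leqnn HW.
have [b /andP [/andP [ab bN] Mb] Bmin] := find_ex_minn Hex.
have Wb1 : W a b.-1 < M.
  case: (eqVneq b.-1 a) => [->|Nb]; first by rewrite W_nil.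
  rewrite ltnNge; apply/negP => H.
  have := Bmin b.-1; rewrite H andbT; case: b ab bN Mb Bmin Nb H => // b ab bN Mb Bmin Nb H /=.
  have ab' : a < b by rewrite ltn_neqAle eq_sym Nb -ltnS.
  by rewrite ab' (leq_trans (leqnSn b) bN) => /(_ isT); rewrite ltnn.
have Wab : W a b < 2 * M.
  have Eb : b = b.-1.+1 by rewrite prednK // (leq_ltn_trans (leq0n a) ab).
  have ab1 : a <= b.-1 by rewrite -ltnS -Eb.
  have HW2 : W a b = W a b.-1 + words_of p (ev b.-1).
    by rewrite {1}Eb (@W_cat a b.-1 b.-1.+1) ?W_one // ab1 leqnSn.
  have b1N : b.-1 < N by rewrite (leq_trans _ bN) // {2}Eb.
  have := words_le b1N; rewrite HW2; lia.
have Hab : #|Tr a b| <= 4 * M * s.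
  apply: leq_trans (seg_block (ltnW ab) bN (leq_trans (_ : _ <= 4 * M) Hs)) _; first by lia.
  by apply: leq_mul => //; lia.
have IHb : M * #|Tr b N| <= 4 * M * s * (M + W b N) by apply: IH => //; lia.
have WaN : W a N = W a b + W b N by apply: W_cat; rewrite (ltnW ab) bN.
have TS : #|Tr a N| <= #|Tr a b| + #|Tr b N| by apply: Tr_split; rewrite (ltnW ab) bN.
apply: (@leq_trans (M * #|Tr a b| + M * #|Tr b N|)); first by rewrite -mulnDr leq_mul2l TS orbT.
rewrite WaN addnCA mulnDr.
have H : M * #|Tr a b| <= 4 * M * s * W a b.
  rewrite mulnC; apply: leq_mul => //.
apply: leq_add => //.
Qed.
End Proc.

Lemma arith (K n P M C W L F a s : nat) :
  125 * 125 * 208 <= K -> 0 < n -> 0 < M ->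
  M * P <= C * n ^ 2 -> a * a * a <= P * F -> n <= 5 * a ->
  F <= 4 * s * (M + W) -> s * s <= 13 * M -> W <= M * L ->
  4 * K * C ^ 3 + 4 * C + 1 <= P ->
  n ^ 4 <= P * ((4 * K * C ^ 3 + 4 * K * C + 1) * W) ^ 2 /\
  P <= ((4 * K * C ^ 3 + 4 * K * C + 1) * L) ^ 2.
Proof.
move=> HK n0 M0 h1 h2 h3 h4 h5 h6 h7.
have h1' : M * P <= C * (n * n) by move: h1; rewrite (_ : n ^ 2 = n * n) // expnS expn1.
set X := (M + W) * (M + W).
have A : n * n * n <= 125 * (P * F).
  apply: (@leq_trans ((5 * a) * (5 * a) * (5 * a))); first by rewrite !leq_mul.
  have -> : (5 * a) * (5 * a) * (5 * a) = 125 * (a * a * a) by ring.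
  by rewrite leq_mul2l h2 orbT.
have B : F * F <= 208 * M * X.
  apply: (@leq_trans ((4 * s * (M + W)) * (4 * s * (M + W)))); first by rewrite leq_mul.
  have -> : (4 * s * (M + W)) * (4 * s * (M + W)) = 16 * (s * s) * X by rewrite /X; ring.
  have -> : 208 * M * X = 16 * (13 * M) * X by ring.
  by rewrite leq_mul // leq_mul.
have C1 : (n * n) * (n * n * n * n) <= (n * n) * (K * C * P * X).
  apply: (@leq_trans ((125 * (P * F)) * (125 * (P * F)))).
    have -> : (n * n) * (n * n * n * n) = (n * n * n) * (n * n * n) by ring.
    by rewrite leq_mul.
  have -> : (125 * (P * F)) * (125 * (P * F)) = 125 * 125 * P * (P * (F * F)) by ring.
  apply: (@leq_trans (125 * 125 * P * (P * (208 * M * X)))).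
    by rewrite leq_mul2l leq_mul2l B !orbT.
  have -> : 125 * 125 * P * (P * (208 * M * X)) = 125 * 125 * 208 * P * ((M * P) * X) by ring.
  apply: (@leq_trans (125 * 125 * 208 * P * ((C * (n * n)) * X))).
    by rewrite leq_mul2l leq_mul2r h1' !orbT.
  have -> : n * n * (K * C * P * X) = K * P * ((C * (n * n)) * X) by ring.
  by rewrite leq_mul2r leq_mul2r HK !orbT.
have nn0 : 0 < n * n by rewrite muln_gt0 n0.
have E : n * n * n * n <= K * C * P * X by rewrite -(leq_pmul2l nn0).
have n40 : 0 < n * n * n * n by rewrite !muln_gt0 n0.
have MW : M <= W.
  rewrite leqNgt; apply/negP => WM.
  have X4 : X <= 4 * (M * M).
    apply: (@leq_trans ((M + M) * (M + M))); first by rewrite leq_mul // leq_add2l ltnW.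
    by have -> : (M + M) * (M + M) = 4 * (M * M) by ring.
  have : P * (n * n * n * n) <= (4 * K * C * C * C) * (n * n * n * n).
    apply: (@leq_trans (P * (K * C * P * (4 * (M * M))))).
      by rewrite leq_mul2l (leq_trans E) ?orbT // leq_mul2l X4 orbT.
    have -> : P * (K * C * P * (4 * (M * M))) = 4 * K * C * ((M * P) * (M * P)) by ring.
    apply: (@leq_trans (4 * K * C * ((C * (n * n)) * (C * (n * n))))).
      by rewrite leq_mul2l leq_mul ?orbT.
    by have -> : 4 * K * C * (C * (n * n) * (C * (n * n))) = 4 * K * C * C * C * (n * n * n * n) by ring.
  rewrite leq_pmul2r // => HP.
  have : 4 * K * C ^ 3 < P by apply: leq_trans h7; rewrite addn1 ltnS leq_addr.
  have C3 : C ^ 3 = C * C * C by rewrite !expnS expn0 muln1 mulnA.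
  by rewrite C3 !mulnA ltnNge HP.
have G : n * n * n * n <= (4 * K * C) * P * (W * W).
  apply: (leq_trans E); have -> : 4 * K * C * P * (W * W) = K * C * P * (4 * (W * W)) by ring.
  rewrite leq_mul2l; apply/orP; right.
  apply: (@leq_trans ((W + W) * (W + W))); first by rewrite leq_mul // leq_add2r.
  by have -> : (W + W) * (W + W) = 4 * (W * W) by ring.
set d := 4 * K * C ^ 3 + 4 * K * C + 1.
have dK : 4 * K * C <= d * d.
  apply: (@leq_trans d); first by rewrite /d -addnA addnCA leq_addr.
  by rewrite leq_pmulr // /d addn1.
have dK3 : 4 * K * C * C * C <= d * d.
  apply: (@leq_trans d); last by rewrite leq_pmulr // /d addn1.
  by rewrite /d -addnA (_ : 4 * K * C ^ 3 = 4 * K * C * C * C) ?leq_addr // !expnS expn0 muln1 !mulnA.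
split.
  have -> : n ^ 4 = n * n * n * n by rewrite !expnS expn0 muln1 !mulnA.
  apply: (leq_trans G).
  have -> : P * (d * W) ^ 2 = (d * d) * P * (W * W) by rewrite !expnS expn0 muln1; ring.
  by rewrite leq_mul2r leq_mul2r dK !orbT.
have : P * (n * n * n * n) <= (4 * K * C * C * C * (L * L)) * (n * n * n * n).
  apply: (@leq_trans (P * ((4 * K * C) * P * ((M * L) * (M * L))))).
    by rewrite leq_mul2l (leq_trans G) ?orbT // leq_mul2l leq_mul ?orbT.
  have -> : P * ((4 * K * C) * P * ((M * L) * (M * L))) = 4 * K * C * (L * L) * ((M * P) * (M * P)) by ring.
  apply: (@leq_trans (4 * K * C * (L * L) * ((C * (n * n)) * (C * (n * n))))).
    by rewrite leq_mul2l leq_mul ?orbT.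
  by have -> : 4 * K * C * (L * L) * (C * (n * n) * (C * (n * n))) = 4 * K * C * C * C * (L * L) * (n * n * n * n) by ring.
rewrite leq_pmul2r // => HP.
apply: (leq_trans HP).
have -> : (d * L) ^ 2 = (d * d) * (L * L) by rewrite !expnS expn0 muln1; ring.
by rewrite leq_mul2r dK3 orbT.
Qed.

Lemma card_bigcup_le (I T : finType) (A : I -> {set T}) :
  #|\bigcup_(i : I) A i| <= \sum_(i : I) #|A i|.
Proof.
elim/big_ind2: _ => [|x1 x2 y1 y2 H1 H2|i _] //; first by rewrite cards0.
by apply: leq_trans (leq_add H1 H2); rewrite cardsU leq_subr.
Qed.

Lemma card_interval n (lo len : nat) : lo + len <= n.+1 ->
  len <= #|[set i : 'I_n.+1 | lo <= i < lo + len]|.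
Proof.
move=> H.
have finj : injective (fun x : 'I_len => (inord (lo + x) : 'I_n.+1)).
  move=> x y /(congr1 (@nat_of_ord _)); rewrite !inordK; last 2 first.
  - by apply: leq_trans H; rewrite ltn_add2l.
  - by apply: leq_trans H; rewrite ltn_add2l.
  by move/eqP; rewrite eqn_add2l => /eqP /val_inj.
have E := card_imset [set: 'I_len] finj; rewrite cardsT card_ord in E; rewrite -{1}E.
apply: subset_leq_card; apply/subsetP => y /imsetP [x _ ->].
rewrite inE inordK ?leq_addr ?ltn_add2l ?ltn_ord //.
by apply: leq_trans H; rewrite ltn_add2l.
Qed.

Section Final.
Variables (n P M : nat) (init : state n P) (run : seq (event n P * state n P)).
Variable e0 : event n P.

Lemma bandwidth_W p : bandwidth p run = W init run e0 p 0 (size run).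
Proof.
rewrite /bandwidth /W subn0 -{1}(mkseq_nth (e0, init) run) /mkseq -map_comp.
by [].
Qed.

Lemma W_latency i0 (r : seq (event n P * state n P)) p : valid_run M i0 r ->
  sumn [seq words_of p ep.1 | ep <- r] <= M * sumn [seq msgs_of p ep.1 | ep <- r].
Proof.
elim: r i0 => [|[e s] r IH] i0 //= [[_ He] Hr]; rewrite mulnDr leq_add ?(IH s) //.
by case: e He => //= q1 q2 xs [_ [Hs _]]; case: ifP; rewrite ?muln1.
Qed.
End Final.

Lemma sqrt_facts (M : nat) : 0 < M -> let s := (Nat.sqrt (4 * M)).+1 in 4 * M <= s * s /\ s * s <= 13 * M.
Proof.
move=> M0 s; have [h1 h2] := PeanoNat.Nat.sqrt_spec (4 * M) (PeanoNat.Nat.le_0_l _).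
rewrite /s; set r := Nat.sqrt (4 * M) in h1 h2 *.
have h3 : r <= r * r by case: (r) => // r0; rewrite leq_pmulr.
lia.
Qed.

Lemma third_facts n : 2 < n -> n <= 5 * (n %/ 3) /\ 3 * (n %/ 3) <= n.
Proof. lia. Qed.

Theorem corollary2p6 (C : nat) :
  exists d P0 : nat, 0 < d /\
    forall (n P M : nat) (init : state n P)
           (run : seq (event n P * state n P)),
      0 < n -> P0 <= P ->
      @layout_2D C n P M init ->
      @classical_cholesky_run n P M init run ->
      (exists p : 'I_P, n ^ 4 <= P * (d * bandwidth p run) ^ 2) /\
      (exists p : 'I_P, P <= (d * latency p run) ^ 2).
Proof.
set K := 125 * 125 * 208.
exists (4 * K * C ^ 3 + 4 * K * C + 1), (4 * K * C ^ 3 + 4 * C + 1); split; first by rewrite addn1.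
move=> [//|n'] P M init run _ HP [MP [Hfit [Hinit0 Hstore]]] [Hv [Hnd Hall]].
set n := n'.+1 in MP Hstore Hall Hinit0 *.
have Hinit : forall q x, x \in init q -> exists i j : 'I_n, x = Ps i j true set0.
  by move=> q x /InP /Hinit0 [i [j [_ ->]]]; exists i, j.
have P0 : 0 < P by apply: leq_trans HP; rewrite addn1.
pose p0 : 'I_P := Ordinal P0.
pose e0 : event n P := Keep p0 [::].
have M0 : 0 < M.
  have [q Hq] := Hstore ord0 ord0 (leqnn 0).
  have := Hfit q; move: Hq; case: (init q) => [|x l] //= _.
  by apply: leq_trans.
have n3 : 2 < n.
  rewrite ltnNge; apply/negP => Hn.
  have : P <= 4 * C.
    apply: (@leq_trans (M * P)); first by rewrite leq_pmull.
    apply: (leq_trans MP); rewrite mulnC leq_mul2r; apply/orP; right.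
    by rewrite (_ : 4 = 2 ^ 2) // leq_exp2r.
  have : 4 * C < P by apply: leq_trans HP; rewrite addn1 ltnS addnC leq_addr.
  by rewrite ltnNge => /negP.
set a := n %/ 3.
have [h3 h3'] := third_facts n3.
set N := size run.
pose Tr' (q : 'I_P) := Tr init run e0 q 0 N.
pose I1 := [set k : 'I_n | 0 <= k < 0 + a].
pose I2 := [set j : 'I_n | a <= j < a + a].
pose I3 := [set i : 'I_n | a + a <= i < a + a + a].
have Bcard : a * a * a <= #|setX (setX I3 I2) I1|.
  rewrite !cardsX; apply: leq_mul; first apply: leq_mul.
  - by apply: card_interval; rewrite /n; lia.
  - by apply: card_interval; rewrite /n; lia.
  - by apply: card_interval; rewrite /n; lia.
have Bsub : setX (setX I3 I2) I1 \subset \bigcup_(q : 'I_P) Tr' q.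
  apply/subsetP => [[[i j] k]]; rewrite !inE /= => /andP [/andP [Hi Hj] Hk].
  have kj : k < j by lia.
  have ji : j <= i by lia.
  have [u [q [Hu Hq]]] := required e0 Hv Hinit Hall kj ji.
  apply/bigcupP; exists q => //; rewrite inE; apply/hasP; exists u => //.
  by rewrite mem_iota add0n subn0.
pose qm := [arg max_(q > p0) #|Tr' q|].
have Hqm : forall q, #|Tr' q| <= #|Tr' qm|.
  by rewrite /qm; case: arg_maxnP => // q0 _ H q; apply: H.
set F := #|Tr' qm|.
have h2 : a * a * a <= P * F.
  apply: (leq_trans Bcard); apply: (leq_trans (subset_leq_card Bsub)).
  apply: (leq_trans (card_bigcup_le _)).
  apply: (@leq_trans (\sum_(q : 'I_P) F)); first by apply: leq_sum => q _; apply: Hqm.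
  by rewrite sum_nat_const card_ord.
have [s4 s13] := sqrt_facts M0.
set s := (Nat.sqrt (4 * M)).+1 in s4 s13.
have Hseg := segments e0 Hv Hfit Hinit qm Hnd Hall M0 s4 (leq0n N).
set Wq := W init run e0 qm 0 N in Hseg.
have h4 : F <= 4 * s * (M + Wq).
  rewrite -(leq_pmul2l M0); apply: (leq_trans Hseg); by rewrite !mulnA (mulnC M 4).
have Hbw : bandwidth qm run = Wq by rewrite (bandwidth_W init run e0).
have h6 : Wq <= M * latency qm run by rewrite -Hbw; apply: W_latency Hv.
have [G1 G2] := arith (leqnn K) (ltn0Sn n') M0 MP h2 h3 h4 s13 h6 HP.
by split; exists qm; rewrite ?Hbw.
Qed.
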